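(* For every $\pi\in S_n$, the lattice $G/\beta_\pi$ is a slim semimodular lattice of length $n$.
   Context: $G$ is the direct product of two chains $0=c_0\prec\dots\prec c_n$ and $0=d_0\prec\dots\prec d_n$, its elements written uniquely as $c_i\vee d_j$. A join-congruence is an equivalence relation compatible with $\vee$. For $\pi\in S_n$ (permutations of $\{1,\dots,n\}$), $\beta_\pi$ is the join, in the lattice of join-congruences of $(G;\vee)$, of the smallest join-congruences collapsing $\{c_{i-1}\vee d_{\pi(i)},c_i\vee d_{\pi(i)-1},c_i\vee d_{\pi(i)}\}$, $i=1,\dots,n$; the quotient join-semilattice $G/\beta_\pi$ is finite with $0$, hence a lattice. A finite lattice is slim if its join-irreducible elements (including $0$) contain no three-element antichain; semimodular means $a\prec b$ implies $a\vee c\preceq b\vee c$. *)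

(* Defs.v *)
From mathcomp Require Import all_boot all_order all_fingroup.
Set Implicit Arguments. Unset Strict Implicit. Unset Printing Implicit Defensive.

Section JoinSemilattice.
Variables (T : finType) (join : T -> T -> T) (bot : T).

Definition jle (x y : T) : bool := join x y == y.
Definition jlt (x y : T) : bool := (x != y) && jle x y.
Definition jcomparable (x y : T) : bool := jle x y || jle y x.
Definition jcovers (x y : T) : bool := jlt x y && [forall z, ~~ (jlt x z && jlt z y)].
Definition jcovers_eq (x y : T) : bool := (x == y) || jcovers x y.

(* (T, join, bot) is a join-semilattice with least element bot
   (finite, hence a lattice) *)
Definition jsl_axioms : Prop :=
  [/\ associative join, commutative join, idempotent_op join & left_id bot join].

Definition jirr (x : T) : bool :=
  (x != bot) && [forall y, forall z, (join y z == x) ==> ((y == x) || (z == x))].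
Definition jirr0 (x : T) : bool := (x == bot) || jirr x.

Definition slim : bool :=
  [forall x, forall y, forall z,
     [&& jirr0 x, jirr0 y & jirr0 z] ==>
     [|| jcomparable x y, jcomparable y z | jcomparable x z]].

Definition semimodular : Prop :=
  forall a b c : T, jcovers a b -> jcovers_eq (join a c) (join b c).

Definition jchain (C : {set T}) : bool := [forall x in C, forall y in C, jcomparable x y].
Definition length_is (k : nat) : Prop :=
  (exists C : {set T}, jchain C /\ #|C| = k.+1) /\
  (forall C : {set T}, jchain C -> #|C| <= k.+1).

End JoinSemilattice.

(* The element c_i \/ d_j is represented by the pair (i, j). *)
Notation grid n := ('I_n.+1 * 'I_n.+1)%type.

Definition gjoin n (x y : grid n) : grid n :=
  (inord (maxn x.1 y.1), inord (maxn x.2 y.2)).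

Definition is_jcong n (r : {set grid n * grid n}) : bool :=
  [&& [forall x, (x, x) \in r],
      [forall x, forall y, ((x, y) \in r) ==> ((y, x) \in r)],
      [forall x, forall y, forall z, ((x, y) \in r) && ((y, z) \in r) ==> ((x, z) \in r)] &
      [forall x, forall y, forall z, ((x, y) \in r) ==> ((gjoin x z, gjoin y z) \in r)]].

Definition cg n (S : {set grid n * grid n}) : {set grid n * grid n} :=
  \bigcap_(r | is_jcong r && (S \subset r)) r.

Definition collapse3 n (a b c : grid n) : {set grid n * grid n} :=
  [set (a, b); (b, c); (a, c)].

(* For pi in S_n (on {1..n}) we use p : 'S_n on {0..n-1} with pi(i) = p(i-1)+1.
   For k = i-1 : 'I_n, the triple is
   {c_{i-1} \/ d_{pi i}, c_i \/ d_{pi i - 1}, c_i \/ d_{pi i}}. *)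
Definition tri n (p : 'S_n) (k : 'I_n) : {set grid n * grid n} :=
  collapse3 (inord k, inord (p k).+1) (inord k.+1, inord (p k)) (inord k.+1, inord (p k).+1).

(* beta_pi: the join, in the lattice of join-congruences, of the congruences con(tri k) *)
Definition beta n (p : 'S_n) : {set grid n * grid n} :=
  cg (\bigcup_(k : 'I_n) cg (tri p k)).

Definition cls n (p : 'S_n) (x : grid n) : {set grid n} := [set y | (x, y) \in beta p].
Definition qset n (p : 'S_n) : {set {set grid n}} := [set cls p x | x : grid n].

Notation quot n p := {A : {set grid n} | A \in qset p}.

Lemma cls_in n (p : 'S_n) (x : grid n) : cls p x \in qset p.
Proof. exact: imset_f. Qed.

Definition qcl n (p : 'S_n) (x : grid n) : quot n p := exist _ (cls p x) (cls_in p x).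
Definition qrep n (p : 'S_n) (A : quot n p) : grid n := odflt (ord0, ord0) [pick x in val A].
Definition qjoin n (p : 'S_n) (A B : quot n p) : quot n p := qcl p (gjoin (qrep A) (qrep B)).
Definition qbot n (p : 'S_n) : quot n p := qcl p (ord0, ord0).

(* Main.v *)
Require Import Defs.
From mathcomp Require Import all_boot all_order all_fingroup.
From mathcomp Require Import zify.
Set Implicit Arguments. Unset Strict Implicit. Unset Printing Implicit Defensive.

Lemma gridE n (u v : grid n) : (u.1 : nat) = v.1 -> (u.2 : nat) = v.2 -> u = v.
Proof. by case: u v => [a b] [c d] /= /val_inj -> /val_inj ->. Qed.

Lemma gjoin1 n (u v : grid n) : ((gjoin u v).1 : nat) = maxn u.1 v.1.
Proof. by rewrite /= inordK // gtn_max !ltn_ord. Qed.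
Lemma gjoin2 n (u v : grid n) : ((gjoin u v).2 : nat) = maxn u.2 v.2.
Proof. by rewrite /= inordK // gtn_max !ltn_ord. Qed.

Lemma gjoinC n (u v : grid n) : gjoin u v = gjoin v u.
Proof. by apply: gridE; rewrite !(gjoin1, gjoin2) maxnC. Qed.
Lemma gjoinA n (u v w : grid n) : gjoin u (gjoin v w) = gjoin (gjoin u v) w.
Proof. by apply: gridE; rewrite !(gjoin1, gjoin2) maxnA. Qed.

Definition leg n (u v : grid n) := ((u.1 : nat) <= v.1) && ((u.2 : nat) <= v.2).

Lemma leg_refl n (u : grid n) : leg u u.
Proof. by rewrite /leg !leqnn. Qed.
Lemma leg_trans n (u v w : grid n) : leg u v -> leg v w -> leg u w.
Proof. rewrite /leg => /andP[a b] /andP[c d]; apply/andP; split; lia. Qed.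
Lemma leg_anti n (u v : grid n) : leg u v -> leg v u -> u = v.
Proof. rewrite /leg => /andP[a b] /andP[c d]; apply: gridE; lia. Qed.
Lemma leg_joinl n (u v : grid n) : leg u (gjoin u v).
Proof. rewrite /leg gjoin1 gjoin2; apply/andP; split; lia. Qed.
Lemma leg_joinr n (u v : grid n) : leg v (gjoin u v).
Proof. rewrite gjoinC; exact: leg_joinl. Qed.
Lemma leg_join n (u v w : grid n) : leg u w -> leg v w -> leg (gjoin u v) w.
Proof. rewrite /leg gjoin1 gjoin2 => /andP[a b] /andP[c d]; apply/andP; split; lia. Qed.
Lemma leg_join_eq n (u v : grid n) : leg u v -> gjoin u v = v.
Proof. rewrite /leg => /andP[a b]; apply: gridE; rewrite ?gjoin1 ?gjoin2; lia. Qed.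
Lemma leg_joinS n (u v w : grid n) : leg u v -> leg (gjoin u w) (gjoin v w).
Proof. rewrite /leg !gjoin1 !gjoin2 => /andP[a b]; apply/andP; split; lia. Qed.

Definition hc n (p : 'S_n) (x y : nat) : bool := [exists i : 'I_n, (i == x :> nat) && (p i < y)].
Definition vc n (p : 'S_n) (x y : nat) : bool := [exists i : 'I_n, (p i == y :> nat) && (i < x)].
Definition inM n (p : 'S_n) (u : grid n) := ~~ hc p u.1 u.2 && ~~ vc p u.1 u.2.
Definition stp n (p : 'S_n) (u : grid n) : grid n :=
  if hc p u.1 u.2 then (inord u.1.+1, u.2)
  else if vc p u.1 u.2 then (u.1, inord u.2.+1) else u.
Definition tau n (p : 'S_n) (u : grid n) := iter (2 * n).+1 (stp p) u.

Lemma inordS n x : x < n -> ((inord x.+1 : 'I_n.+1) : nat) = x.+1.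
Proof. by move=> h; rewrite inordK. Qed.

Lemma hc_lt n (p : 'S_n) x y : hc p x y -> x < n.
Proof. by case/existsP => i /andP[/eqP <- _]. Qed.
Lemma vc_lt n (p : 'S_n) x y : vc p x y -> y < n.
Proof. by case/existsP => i /andP[/eqP <- _]. Qed.

Lemma stp_ge n (p : 'S_n) u : leg u (stp p u).
Proof.
rewrite /stp; case: ifP => [/hc_lt h|_]; last case: ifP => [/vc_lt h|_].
- by rewrite /leg /= inordS // leqnSn leqnn.
- by rewrite /leg /= inordS // leqnSn leqnn.
- exact: leg_refl.
Qed.

Lemma stp_sum n (p : 'S_n) u : ~~ inM p u -> (stp p u).1 + (stp p u).2 = (u.1 + u.2).+1 :> nat.
Proof.
rewrite /inM /stp negb_and !negbK; case: ifP => [/hc_lt h|_]; last case: ifP => [/vc_lt h|//].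
- by rewrite /= inordS // addSn.
- by rewrite /= inordS // addnS.
Qed.

Lemma stp_fix n (p : 'S_n) u : inM p u -> stp p u = u.
Proof. by rewrite /inM /stp => /andP[/negbTE -> /negbTE ->]. Qed.

Lemma hstep_le n (p : 'S_n) (u m : grid n) : hc p u.1 u.2 -> leg u m -> inM p m -> leg (inord u.1.+1, u.2) m.
Proof.
rewrite /inM /leg => hu /andP[a b] /andP[h v].
move: (hc_lt hu) => hl; rewrite /= inordS // b andbT.
rewrite ltn_neqAle a andbT; apply/eqP => e; move: h; rewrite -e.
case/existsP: hu => i /andP[e1 e2]; apply/negP; rewrite negbK.
apply/existsP; exists i; rewrite e1 /=; lia.
Qed.

Lemma vstep_le n (p : 'S_n) (u m : grid n) : vc p u.1 u.2 -> leg u m -> inM p m -> leg (u.1, inord u.2.+1) m.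
Proof.
rewrite /inM /leg => vu /andP[a b] /andP[h v].
move: (vc_lt vu) => hl; rewrite /= inordS // a /=.
rewrite ltn_neqAle b andbT; apply/eqP => e; move: v; rewrite -e.
case/existsP: vu => i /andP[e1 e2]; apply/negP; rewrite negbK.
apply/existsP; exists i; rewrite e1 /=; lia.
Qed.

Lemma stp_le n (p : 'S_n) u m : leg u m -> inM p m -> leg (stp p u) m.
Proof.
move=> h1 h2; rewrite /stp; case: ifP => [hu|_]; last case: ifP => [vu|_] //.
- exact: (hstep_le hu h1 h2).
- exact: (vstep_le vu h1 h2).
Qed.

Lemma iter_inM n (p : 'S_n) u k : inM p (iter k (stp p) u) \/ k <= (iter k (stp p) u).1 + (iter k (stp p) u).2.
Proof.
elim: k => [|k [IH|IH]]; first by right.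
- by left; rewrite iterS stp_fix.
- case hM: (inM p (iter k (stp p) u)); first by left; rewrite iterS stp_fix.
  by right; rewrite iterS stp_sum ?hM.
Qed.

Lemma tau_inM n (p : 'S_n) u : inM p (tau p u).
Proof.
case: (iter_inM p u (2 * n).+1) => // h; exfalso.
move: h; rewrite -/(tau p u); move: (ltn_ord (tau p u).1) (ltn_ord (tau p u).2); lia.
Qed.

Lemma tau_ge n (p : 'S_n) u : leg u (tau p u).
Proof.
rewrite /tau; elim: (2 * n).+1 => [|k IH]; first exact: leg_refl.
by rewrite iterS; apply: leg_trans IH (stp_ge _ _).
Qed.

Lemma tau_le n (p : 'S_n) u m : leg u m -> inM p m -> leg (tau p u) m.
Proof.
move=> h hm; rewrite /tau; elim: (2 * n).+1 => [|k IH] //.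
by rewrite iterS; apply: stp_le.
Qed.

Lemma tau_fix n (p : 'S_n) m : inM p m -> tau p m = m.
Proof.
move=> hm; rewrite /tau; elim: (2 * n).+1 => [|k IH] //.
by rewrite iterS IH stp_fix.
Qed.

Lemma tau_mono n (p : 'S_n) u v : leg u v -> leg (tau p u) (tau p v).
Proof. move=> h; apply: tau_le (tau_inM _ _); exact: leg_trans h (tau_ge _ _). Qed.

Lemma tau_join n (p : 'S_n) u w : tau p (gjoin (tau p u) w) = tau p (gjoin u w).
Proof.
apply: leg_anti.
- apply: tau_le (tau_inM _ _); apply: leg_join.
  + apply: tau_le (tau_inM _ _); apply: leg_trans (leg_joinl u w) (tau_ge _ _).
  + apply: leg_trans (leg_joinr u w) (tau_ge _ _).
- apply: tau_mono; apply: leg_joinS; exact: tau_ge.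
Qed.

Lemma tau_join2 n (p : 'S_n) u w : tau p (gjoin (tau p u) (tau p w)) = tau p (gjoin u w).
Proof. by rewrite tau_join gjoinC tau_join gjoinC. Qed.

Lemma tau_stp n (p : 'S_n) u : tau p (stp p u) = tau p u.
Proof.
apply: leg_anti.
- apply: tau_le (tau_inM _ _); apply: stp_le (tau_inM _ _); exact: tau_ge.
- apply: tau_mono; exact: stp_ge.
Qed.

Lemma edge_tau n (p : 'S_n) u v : leg u v -> (forall m, inM p m -> leg u m -> leg v m) -> tau p v = tau p u.
Proof.
move=> h1 h2; apply: leg_anti.
- apply: tau_le (tau_inM _ _); apply: h2 (tau_inM _ _) (tau_ge _ _).
- exact: tau_mono.
Qed.

Lemma tau_hstep n (p : 'S_n) (u : grid n) : hc p u.1 u.2 -> tau p (inord u.1.+1, u.2) = tau p u.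
Proof.
move=> hu; apply: edge_tau => [|m hm hum]; last exact: (hstep_le hu hum hm).
by rewrite /leg /= inordS ?leqnSn ?leqnn //; apply: hc_lt hu.
Qed.

Lemma tau_vstep n (p : 'S_n) (u : grid n) : vc p u.1 u.2 -> tau p (u.1, inord u.2.+1) = tau p u.
Proof.
move=> hu; apply: edge_tau => [|m hm hum]; last exact: (vstep_le hu hum hm).
by rewrite /leg /= inordS ?leqnSn ?leqnn //; apply: vc_lt hu.
Qed.


Lemma cg_min n (S r : {set grid n * grid n}) : is_jcong r -> S \subset r -> cg S \subset r.
Proof. by move=> h1 h2; apply: bigcap_inf; rewrite h1 h2. Qed.
Lemma cg_sub n (S : {set grid n * grid n}) : S \subset cg S.
Proof. by apply/bigcapsP => r /andP[]. Qed.
Lemma cg_jcong n (S : {set grid n * grid n}) : is_jcong (cg S).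
Proof.
apply/and4P; split.
- apply/forallP => x; apply/bigcapP => r /andP[/and4P[/forallP h _ _ _] _]; exact: h.
- apply/forallP => x; apply/forallP => y; apply/implyP => /bigcapP H.
  apply/bigcapP => r hr; case/andP: (hr) => /and4P[_ /forallP h _ _] _.
  by move/forallP: (h x) => /(_ y) /implyP; apply; apply: H.
- apply/forallP => x; apply/forallP => y; apply/forallP => z; apply/implyP => /andP[/bigcapP H1 /bigcapP H2].
  apply/bigcapP => r hr; case/andP: (hr) => /and4P[_ _ /forallP h _] _.
  move/forallP: (h x) => /(_ y) /forallP /(_ z) /implyP; apply.
  by rewrite H1 // H2.
- apply/forallP => x; apply/forallP => y; apply/forallP => z; apply/implyP => /bigcapP H.
  apply/bigcapP => r hr; case/andP: (hr) => /and4P[_ _ _ /forallP h] _.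
  move/forallP: (h x) => /(_ y) /forallP /(_ z) /implyP; apply.
  exact: H.
Qed.

Lemma jc_refl n (r : {set grid n * grid n}) x : is_jcong r -> (x, x) \in r.
Proof. by case/and4P => /forallP h _ _ _. Qed.
Lemma jc_sym n (r : {set grid n * grid n}) x y : is_jcong r -> (x, y) \in r -> (y, x) \in r.
Proof. by case/and4P => _ /forallP h _ _; move/forallP: (h x) => /(_ y) /implyP. Qed.
Lemma jc_trans n (r : {set grid n * grid n}) x y z : is_jcong r -> (x, y) \in r -> (y, z) \in r -> (x, z) \in r.
Proof.
case/and4P => _ _ /forallP h _ h1 h2.
by move/forallP: (h x) => /(_ y) /forallP /(_ z) /implyP; apply; rewrite h1 h2.
Qed.
Lemma jc_join n (r : {set grid n * grid n}) x y z : is_jcong r -> (x, y) \in r -> (gjoin x z, gjoin y z) \in r.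
Proof. by case/and4P => _ _ _ /forallP h; move/forallP: (h x) => /(_ y) /forallP /(_ z) /implyP. Qed.

Definition Rt n (p : 'S_n) : {set grid n * grid n} := [set uv | tau p uv.1 == tau p uv.2].

Lemma Rt_jcong n (p : 'S_n) : is_jcong (Rt p).
Proof.
rewrite /Rt; apply/and4P; split.
- by apply/forallP => x; rewrite inE.
- by apply/forallP => x; apply/forallP => y; rewrite !inE; apply/implyP => /eqP ->.
- apply/forallP => x; apply/forallP => y; apply/forallP => z; rewrite !inE.
  by apply/implyP => /andP[/eqP -> ].
- apply/forallP => x; apply/forallP => y; apply/forallP => z; rewrite !inE.
  by apply/implyP => /eqP e; rewrite -tau_join e tau_join.
Qed.

Lemma ordS_val n (k : 'I_n) : ((inord k : 'I_n.+1) : nat) = k.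
Proof. by rewrite inordK // ltnW // ltnS. Qed.
Lemma ordS_valS n (k : 'I_n) : ((inord k.+1 : 'I_n.+1) : nat) = k.+1.
Proof. by rewrite inordK // ltnS. Qed.

Lemma tri_Rt n (p : 'S_n) k : tri p k \subset Rt p.
Proof.
have e1 : tau p (inord k, inord (p k).+1) = tau p (inord k.+1, inord (p k).+1).
  have h : hc p (inord k : 'I_n.+1) (inord (p k).+1 : 'I_n.+1).
    by apply/existsP; exists k; rewrite ordS_val ordS_valS eqxx /=.
  rewrite -(@tau_hstep n p (inord k, inord (p k).+1) h) /=; congr (tau p (_, _)); apply: val_inj; rewrite /= ordS_val //.
have e2 : tau p (inord k.+1, inord (p k)) = tau p (inord k.+1, inord (p k).+1).
  have h : vc p (inord k.+1 : 'I_n.+1) (inord (p k) : 'I_n.+1).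
    by apply/existsP; exists k; rewrite ordS_val ordS_valS eqxx /=.
  rewrite -(@tau_vstep n p (inord k.+1, inord (p k)) h) /=; congr (tau p (_, _)); apply: val_inj; rewrite /= ordS_val //.
apply/subsetP => x; rewrite /tri /collapse3 !inE.
by move=> /orP[/orP[|]|] /eqP -> /=; rewrite ?e1 ?e2.
Qed.

Lemma beta_Rt n (p : 'S_n) : beta p \subset Rt p.
Proof.
apply: cg_min (Rt_jcong p) _; apply/bigcupsP => k _.
apply: cg_min (Rt_jcong p) (tri_Rt p k).
Qed.

Lemma beta_jcong n (p : 'S_n) : is_jcong (beta p).
Proof. exact: cg_jcong. Qed.

Lemma tri_beta n (p : 'S_n) k : tri p k \subset beta p.
Proof.
apply: subset_trans (cg_sub _) _; apply: subset_trans (cg_sub _).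
by apply: (bigcup_max k).
Qed.

Lemma edge_beta n (p : 'S_n) u : (u, stp p u) \in beta p.
Proof.
have hJ := beta_jcong p.
rewrite /stp; case: ifP => [hu|_]; last case: ifP => [vu|_]; last exact: jc_refl.
- case/existsP: (hu) => i /andP[/eqP ei hi].
  have hp : ((inord i, inord (p i).+1), (inord i.+1, inord (p i).+1)) \in beta p.
    by apply: (subsetP (tri_beta p i)); rewrite !inE eqxx !orbT.
  have := jc_join (ord0, u.2) hJ hp.
  have -> : gjoin (inord i, inord (p i).+1) (ord0, u.2) = u.
    apply: gridE; rewrite ?gjoin1 ?gjoin2 /= ?ordS_val ?ordS_valS; lia.
  have -> // : gjoin (inord i.+1, inord (p i).+1) (ord0, u.2) = (inord u.1.+1, u.2).
  apply: gridE; rewrite ?gjoin1 ?gjoin2 /= ?ordS_val ?ordS_valS ?inordS; try lia.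
  by apply: hc_lt hu.
- case/existsP: (vu) => i /andP[/eqP ei hi].
  have hp : ((inord i.+1, inord (p i)), (inord i.+1, inord (p i).+1)) \in beta p.
    by apply: (subsetP (tri_beta p i)); rewrite !inE eqxx !orbT.
  have := jc_join (u.1, ord0) hJ hp.
  have -> : gjoin (inord i.+1, inord (p i)) (u.1, ord0) = u.
    apply: gridE; rewrite ?gjoin1 ?gjoin2 /= ?ordS_val ?ordS_valS; lia.
  have -> // : gjoin (inord i.+1, inord (p i).+1) (u.1, ord0) = (u.1, inord u.2.+1).
  apply: gridE; rewrite ?gjoin1 ?gjoin2 /= ?ordS_val ?ordS_valS ?inordS; try lia.
  by apply: vc_lt vu.
Qed.

Lemma tau_beta n (p : 'S_n) u : (u, tau p u) \in beta p.
Proof.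
rewrite /tau; elim: (2 * n).+1 => [|k IH]; first exact: jc_refl (beta_jcong p).
by rewrite iterS; apply: jc_trans (beta_jcong p) IH (edge_beta _ _).
Qed.

Lemma betaE n (p : 'S_n) u v : ((u, v) \in beta p) = (tau p u == tau p v).
Proof.
apply/idP/eqP => [h|e]; first by move: (subsetP (beta_Rt p) _ h); rewrite /Rt inE => /eqP.
apply: jc_trans (beta_jcong p) (tau_beta p u) _; rewrite e.
apply: jc_sym (beta_jcong p) (tau_beta p v).
Qed.


Lemma card_split (T : finType) (P Q : pred T) :
  #|[set i | P i]| = #|[set i | P i && Q i]| + #|[set i | P i && ~~ Q i]|.
Proof.
rewrite -(cardsID [set i | Q i] [set i | P i]).
have -> : [set i | P i] :&: [set i | Q i] = [set i | P i && Q i] by apply/setP => i; rewrite !inE.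
have -> // : [set i | P i] :\: [set i | Q i] = [set i | P i && ~~ Q i] by apply/setP => i; rewrite !inE andbC.
Qed.

Lemma card_uniq (T : finType) (A : {set T}) :
  (forall i j, i \in A -> j \in A -> i = j) -> #|A| = [exists i, i \in A].
Proof.
move=> hu; case: existsP => [[i hi]|h].
- have -> : A = [set i].
    by apply/setP => j; rewrite !inE; apply/idP/eqP => [hj|->] //; apply: hu.
  by rewrite cards1.
- apply/eqP; rewrite cards_eq0; apply/eqP/setP => j; rewrite !inE.
  by apply/negbTE/negP => hj; apply: h; exists j.
Qed.

Definition hh n (p : 'S_n) (x y : nat) := y + #|[set i : 'I_n | (i < x) && (y <= p i)]|.
Definition hg n (p : 'S_n) (u : grid n) := hh p u.1 u.2.

Lemma hhSx n (p : 'S_n) x y : hh p x.+1 y = hh p x y + [exists i : 'I_n, (i == x :> nat) && (y <= p i)].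
Proof.
rewrite /hh (card_split _ (fun i : 'I_n => i == x :> nat)) -addnA; congr (_ + _).
rewrite [in LHS]addnC; congr (_ + _).
- apply: eq_card => i; rewrite !inE ltnS; case: (ltngtP i x) => //= e; rewrite ?andbT ?andbF //.
- rewrite card_uniq. 2: move=> i j; rewrite !inE => /andP[_ /eqP a] /andP[_ /eqP b]. 2: by apply: val_inj; rewrite /= a b.
  congr nat_of_bool; apply/existsP/existsP => [[i hi]|[i hi]]; exists i; move: hi; rewrite ?inE; rewrite ?ltnS; [case/andP => /andP[a b] c|case/andP => a b].
  + by rewrite c b.
  + by rewrite a b (eqP a) leqnn.
Qed.

Lemma hhSy n (p : 'S_n) x y : hh p x y.+1 + vc p x y = (hh p x y).+1.
Proof.
have E : #|[set i : 'I_n | (i < x) && (y <= p i)]| = #|[set i : 'I_n | (i < x) && (y.+1 <= p i)]| + vc p x y.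
  rewrite (card_split _ (fun i : 'I_n => p i == y :> nat)) addnC; congr (_ + _).
  - apply: eq_card => i; rewrite !inE; case: (ltngtP y (p i)) => //= e; by rewrite ?andbF ?andbT.
  - rewrite card_uniq. 2: move=> i j; rewrite !inE => /andP[/andP[_ _] /eqP a] /andP[/andP[_ _] /eqP b]. 2: by apply: perm_inj; apply: val_inj; exact: (etrans a (esym b)).
    congr nat_of_bool; apply/existsP/existsP => [[i hi]|[i hi]]; exists i; move: hi; rewrite ?inE.
    + by case/andP => /andP[a b] c; rewrite c a.
    + by case/andP => /eqP a b; rewrite b a leqnn eqxx.
rewrite /hh E; lia.
Qed.

Lemma hh_monox n (p : 'S_n) x x' y : x <= x' -> hh p x y <= hh p x' y.
Proof.
move=> h; rewrite leq_add2l; apply: subset_leq_card; apply/subsetP => i; rewrite !inE.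
by case/andP => a ->; rewrite andbT (leq_trans a h).
Qed.

Lemma hh_Sy n (p : 'S_n) x y : hh p x y <= hh p x y.+1 <= (hh p x y).+1.
Proof. have := hhSy p x y; case: (vc p x y) => /= e; lia. Qed.

Lemma hh_Sx n (p : 'S_n) x y : hh p x.+1 y <= (hh p x y).+1.
Proof. rewrite hhSx; case: [exists _, _] => /=; lia. Qed.

Lemma hh_mono n (p : 'S_n) x x' y y' : x <= x' -> y <= y' -> hh p x y <= hh p x' y'.
Proof.
move=> hx hy; apply: leq_trans (hh_monox p y hx) _.
apply: (@homo_leq _ (fun y => hh p x' y) leq) hy => //.
- by move=> a b c; apply: leq_trans.
- by move=> i; case/andP: (hh_Sy p x' i).
Qed.

Lemma hh_hc n (p : 'S_n) x y : hc p x y -> hh p x.+1 y = hh p x y.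
Proof.
case/existsP => i /andP[/eqP e h]; rewrite hhSx.
case: existsP => [[j /andP[/eqP ej hj]]|] /=; last by rewrite addn0.
have ij : i = j by apply: val_inj; rewrite /= e ej.
by move: h; rewrite ij ltnNge hj.
Qed.

Lemma hh_vc n (p : 'S_n) x y : vc p x y -> hh p x y.+1 = hh p x y.
Proof. move=> h; have := hhSy p x y; rewrite h /=; lia. Qed.

Lemma hg_tau n (p : 'S_n) u : hg p (tau p u) = hg p u.
Proof.
rewrite /tau; elim: (2 * n).+1 => [|k IH] //; rewrite iterS -IH.
move: (iter k (stp p) u) => w; rewrite /hg /stp.
case: ifP => [h|_]; last case: ifP => [h|_] //.
- by rewrite /= inordS ?(hh_hc h) //; apply: hc_lt h.
- by rewrite /= inordS ?(hh_vc h) //; apply: vc_lt h.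
Qed.

Lemma hg_mono n (p : 'S_n) u v : leg u v -> hg p u <= hg p v.
Proof. by case/andP => a b; apply: hh_mono. Qed.

Lemma hhM_x n (p : 'S_n) (m : grid n) : inM p m -> m.1 < n -> hh p m.1.+1 m.2 = (hh p m.1 m.2).+1.
Proof.
case/andP => nh _ hn; rewrite hhSx.
case: existsP => [_|hn2]; first by rewrite addn1.
exfalso; apply: hn2; exists (Ordinal hn); rewrite eqxx /= leqNgt; apply/negP => hlt.
by move/negP: nh; apply; apply/existsP; exists (Ordinal hn); rewrite eqxx.
Qed.

Lemma hhM_y n (p : 'S_n) (m : grid n) : inM p m -> hh p m.1 m.2.+1 = (hh p m.1 m.2).+1.
Proof. case/andP => _ nv; by have := hhSy p m.1 m.2; rewrite (negbTE nv) addn0. Qed.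

Lemma hg_lt_M n (p : 'S_n) m m' : inM p m -> leg m m' -> m != m' -> hg p m < hg p m'.
Proof.
case/andP => nh nv /[dup] hl /andP[a b] ne.
case: (ltnP m.1 m'.1) => h1.
- have hn : m.1 < n by move: (ltn_ord m'.1); lia.
  apply: leq_trans (hh_mono p h1 b); rewrite hhSx.
  case: existsP => [_|hn2]; first by rewrite addn1.
  exfalso; apply: hn2; exists (Ordinal hn); rewrite eqxx /= leqNgt; apply/negP => hlt.
  by move/negP: nh; apply; apply/existsP; exists (Ordinal hn); rewrite eqxx.
- have e1 : (m.1 : nat) = m'.1 by lia.
  have h2 : m.2 < m'.2.
    rewrite ltn_neqAle b andbT; apply/eqP => e2; move/eqP: ne; apply; exact: gridE.
  apply: leq_trans (hh_mono p (leq_trans a (leqnn _)) h2); rewrite /hg.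
  by have := hhSy p m.1 m.2; rewrite (negbTE nv) addn0 => ->.
Qed.

Lemma hg_le_n n (p : 'S_n) (u : grid n) : hg p u <= n.
Proof.
apply: leq_trans (hh_mono p (ltnSE (ltn_ord u.1)) (ltnSE (ltn_ord u.2))) _.
rewrite /hh addnC -[X in _ <= X]add0n leq_add2r leqn0 cards_eq0; apply/eqP/setP => i.
by rewrite !inE ltn_ord /= leqNgt ltn_ord.
Qed.

Lemma hh_x0 n (p : 'S_n) x : x <= n -> hh p x 0 = x.
Proof.
elim: x => [_|x IH hx]; first by rewrite /hh add0n; apply/eqP; rewrite cards_eq0; apply/eqP/setP => i; rewrite !inE.
rewrite hhSx IH ?(ltnW hx) //; case: existsP => [_|h]; first by rewrite addn1.
by exfalso; apply: h; exists (Ordinal hx); rewrite eqxx.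
Qed.


Lemma clsE n (p : 'S_n) x y : (y \in cls p x) = (tau p x == tau p y).
Proof. by rewrite /cls inE betaE. Qed.

Lemma qset_cls n (p : 'S_n) (A : quot n p) : exists x, val A = cls p x.
Proof. by case: A => A /= /imsetP [x _ ->]; exists x. Qed.

Lemma qrep_in n (p : 'S_n) (A : quot n p) : qrep A \in val A.
Proof.
have [x ex] := qset_cls A.
rewrite /qrep; case: pickP => [y hy //|h].
by move: (h x); rewrite ex clsE eqxx.
Qed.

Lemma cls_eq n (p : 'S_n) u v : tau p u = tau p v -> cls p u = cls p v.
Proof. by move=> e; apply/setP => y; rewrite !clsE e. Qed.

Lemma qcl_eq n (p : 'S_n) u v : tau p u = tau p v -> qcl p u = qcl p v.
Proof. by move=> e; apply: val_inj; apply: cls_eq. Qed.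

Definition Psi n (p : 'S_n) (A : quot n p) : grid n := tau p (qrep A).

Lemma Psi_qcl n (p : 'S_n) u : Psi (qcl p u) = tau p u.
Proof. by have := qrep_in (qcl p u); rewrite /= clsE => /eqP ->. Qed.

Lemma qcl_qrep n (p : 'S_n) (A : quot n p) : qcl p (qrep A) = A.
Proof.
apply: val_inj => /=; have [x ex] := qset_cls A; have h := qrep_in A.
rewrite ex clsE in h; rewrite ex; apply: cls_eq; by rewrite (eqP h).
Qed.

Lemma Psi_inj n (p : 'S_n) (A B : quot n p) : Psi A = Psi B -> A = B.
Proof. by move=> e; rewrite -(qcl_qrep A) -(qcl_qrep B); apply: qcl_eq. Qed.

Lemma Psi_join n (p : 'S_n) (A B : quot n p) : Psi (qjoin A B) = tau p (gjoin (Psi A) (Psi B)).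
Proof. by rewrite /qjoin Psi_qcl /Psi tau_join2. Qed.

Lemma Psi_inM n (p : 'S_n) (A : quot n p) : inM p (Psi A).
Proof. exact: tau_inM. Qed.

Lemma jleE n (p : 'S_n) (A B : quot n p) : jle (@qjoin n p) A B = leg (Psi A) (Psi B).
Proof.
rewrite /jle; apply/eqP/idP => [e|l].
- rewrite -e Psi_join; apply: leg_trans (tau_ge _ _); exact: leg_joinl.
- by apply: Psi_inj; rewrite Psi_join leg_join_eq // tau_fix // Psi_inM.
Qed.

Lemma HQ_lt n (p : 'S_n) (A B : quot n p) : jlt (@qjoin n p) A B -> hg p (Psi A) < hg p (Psi B).
Proof.
case/andP => ne; rewrite jleE => l; apply: hg_lt_M (Psi_inM _) l _.
by apply/eqP => e; move/eqP: ne; apply; exact: Psi_inj.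
Qed.

Definition isX n (p : 'S_n) (A : quot n p) := [exists i : 'I_n.+1, A == qcl p (i, ord0)].
Definition isY n (p : 'S_n) (A : quot n p) := [exists i : 'I_n.+1, A == qcl p (ord0, i)].

Lemma cmpX n (p : 'S_n) (A B : quot n p) : isX A -> isX B -> jcomparable (@qjoin n p) A B.
Proof.
rewrite /jcomparable !jleE => /existsP [i /eqP ->] /existsP [j /eqP ->]; rewrite !Psi_qcl.
case: (leqP i j) => h; [rewrite tau_mono // | rewrite orbC tau_mono //]; by rewrite /leg /= ?h ?(ltnW h) ?leqnn.
Qed.

Lemma cmpY n (p : 'S_n) (A B : quot n p) : isY A -> isY B -> jcomparable (@qjoin n p) A B.
Proof.
rewrite /jcomparable !jleE => /existsP [i /eqP ->] /existsP [j /eqP ->]; rewrite !Psi_qcl.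
case: (leqP i j) => h; [rewrite tau_mono // | rewrite orbC tau_mono //]; by rewrite /leg /= ?h ?(ltnW h) ?leqnn.
Qed.

Lemma jirr0_XY n (p : 'S_n) (A : quot n p) : jirr0 (@qjoin n p) (qbot p) A -> isX A || isY A.
Proof.
case/orP => [/eqP ->|/andP[_ /forallP h]].
  by apply/orP; left; apply/existsP; exists ord0.
move/forallP: (h (qcl p ((qrep A).1, ord0))) => /(_ (qcl p (ord0, (qrep A).2))) /implyP H.
have e : qjoin (qcl p ((qrep A).1, ord0)) (qcl p (ord0, (qrep A).2)) == A.
  apply/eqP/Psi_inj; rewrite Psi_join !Psi_qcl tau_join2 /Psi; congr (tau p _).
  by apply: gridE; rewrite ?gjoin1 ?gjoin2 /=; lia.
by case/orP: (H e) => /eqP <-; apply/orP; [left|right]; apply/existsP; [exists (qrep A).1 | exists (qrep A).2].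
Qed.


Lemma semimod n (p : 'S_n) : semimodular (@qjoin n p).
Proof.
move=> a b c /andP[/andP[ne hle] /forallP hz]; rewrite jleE in hle.
set m := Psi a in hle *; set m' := Psi b in hle *.
have neq : m != m' by apply/eqP => e; move/eqP: ne; apply; exact: Psi_inj.
have hM : inM p m := Psi_inM a.
have [v [hv1 hv2 hv3 hv4]] : exists v : grid n, [/\ leg m v, leg v m', hg p v = (hg p m).+1 &
    forall w, hg p (gjoin v w) <= (hg p (gjoin m w)).+1].
  case/andP: (hle) => l1 l2.
  case: (ltnP m.1 m'.1) => h1.
  - have hn : m.1 < n by move: (ltn_ord m'.1); lia.
    exists (inord m.1.+1, m.2); split.
    + by rewrite /leg /= inordS // leqnSn leqnn.
    + by rewrite /leg /= inordS // h1 l2.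
    + by rewrite /hg /= inordS // hhM_x.
    + move=> w; rewrite /hg !gjoin1 !gjoin2 /= inordS //.
      apply: leq_trans (hh_Sx p _ _); apply: hh_mono; lia.
  - have e1 : (m.1 : nat) = m'.1 by lia.
    have h2 : m.2 < m'.2.
      rewrite ltn_neqAle l2 andbT; apply/eqP => e2; move/eqP: neq; apply; exact: gridE.
    have hn : m.2 < n by move: (ltn_ord m'.2); lia.
    exists (m.1, inord m.2.+1); split.
    + by rewrite /leg /= inordS // leqnSn leqnn.
    + by rewrite /leg /= inordS // h2 l1.
    + by rewrite /hg /= inordS // hhM_y.
    + move=> w; rewrite /hg !gjoin1 !gjoin2 /= inordS //.
      apply: leq_trans (proj2 (andP (hh_Sy p _ _))); apply: hh_mono; lia.
have hd : qcl p v = b.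
  apply/eqP; apply/negPn/negP => ndb.
  move: (hz (qcl p v)); rewrite negb_and => /orP[] /negP; apply.
  - apply/andP; split.
    + apply/eqP => e; have : hg p (Psi a) = hg p (Psi (qcl p v)) by rewrite e.
      rewrite Psi_qcl hg_tau hv3 -/m; lia.
    + by rewrite jleE Psi_qcl; apply: leg_trans hv1 (tau_ge _ _).
  - by rewrite /jlt ndb jleE Psi_qcl; apply: tau_le hv2 (Psi_inM b).
set w := Psi c.
have PX : Psi (qjoin a c) = tau p (gjoin m w) by rewrite Psi_join.
have PY : Psi (qjoin b c) = tau p (gjoin v w) by rewrite Psi_join -hd Psi_qcl tau_join.
have lXY : leg (Psi (qjoin a c)) (Psi (qjoin b c)) by rewrite PX PY; apply: tau_mono; apply: leg_joinS.
have hY : hg p (Psi (qjoin b c)) <= (hg p (Psi (qjoin a c))).+1 by rewrite PX PY !hg_tau.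
rewrite /jcovers_eq; case: (eqVneq (qjoin a c) (qjoin b c)) => [->|nXY] //=.
apply/andP; split; first by rewrite /jlt nXY jleE lXY.
apply/forallP => z; apply/negP => /andP[h1 h2].
have := HQ_lt h1; have := HQ_lt h2; lia.
Qed.

Lemma jsl n (p : 'S_n) : jsl_axioms (@qjoin n p) (qbot p).
Proof.
split.
- move=> A B C; apply: Psi_inj; rewrite !Psi_join tau_join gjoinC tau_join gjoinC.
  by rewrite gjoinA.
- by move=> A B; rewrite /qjoin gjoinC.
- move=> A; apply: Psi_inj; rewrite Psi_join.
  have -> : gjoin (Psi A) (Psi A) = Psi A by apply: leg_join_eq; apply: leg_refl.
  by rewrite tau_fix // Psi_inM.
- move=> A; apply: Psi_inj; rewrite Psi_join /qbot Psi_qcl tau_join.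
  have -> : gjoin (ord0, ord0) (Psi A) = Psi A by apply: leg_join_eq.
  by rewrite tau_fix // Psi_inM.
Qed.

Lemma slimQ n (p : 'S_n) : slim (@qjoin n p) (qbot p).
Proof.
apply/forallP => x; apply/forallP => y; apply/forallP => z; apply/implyP => /and3P[hx hy hz].
move: (jirr0_XY hx) (jirr0_XY hy) (jirr0_XY hz) => /orP[X1|Y1] /orP[X2|Y2] /orP[X3|Y3];
first [ by rewrite (cmpX X1 X2) | by rewrite (cmpX X2 X3) orbT | by rewrite (cmpX X1 X3) !orbT
      | by rewrite (cmpY Y1 Y2) | by rewrite (cmpY Y2 Y3) orbT | by rewrite (cmpY Y1 Y3) !orbT ].
Qed.

Lemma lengthQ n (p : 'S_n) : length_is (@qjoin n p) n.
Proof.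
split.
- exists [set qcl p (i, ord0) | i : 'I_n.+1]; split.
  + apply/forall_inP => x /imsetP [i _ ->]; apply/forall_inP => y /imsetP [j _ ->].
    by apply: cmpX; apply/existsP; [exists i | exists j].
  + rewrite card_imset ?card_ord // => i j e.
    have : hg p (Psi (qcl p (i, ord0))) = hg p (Psi (qcl p (j, ord0))) by rewrite e.
    rewrite !Psi_qcl !hg_tau /hg /= !hh_x0 ?(ltnSE (ltn_ord i)) ?(ltnSE (ltn_ord j)) //.
    exact: val_inj.
- move=> C /forall_inP hC.
  have inj : {in C &, injective (fun A => (inord (hg p (Psi A)) : 'I_n.+1))}.
    move=> A B hA hB /(congr1 val) /=; rewrite !inordK ?ltnS ?hg_le_n // => e.
    apply/eqP; apply/negPn/negP => ne.
    move/forall_inP: (hC A hA) => /(_ B hB) /orP [] l.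
    + by have := HQ_lt (introT andP (conj ne l)); rewrite e ltnn.
    + by rewrite eq_sym in ne; have := HQ_lt (introT andP (conj ne l)); rewrite e ltnn.
  rewrite -(card_in_imset inj); apply: leq_trans (max_card _) _; by rewrite card_ord.
Qed.

Theorem lemma4p2 (n : nat) (p : 'S_n) :
  jsl_axioms (@qjoin n p) (qbot p) /\
  slim (@qjoin n p) (qbot p) /\
  semimodular (@qjoin n p) /\
  length_is (@qjoin n p) n.
Proof.
split; first exact: jsl.
split; first exact: slimQ.
split; first exact: semimod.
exact: lengthQ.
Qed.
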